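(* Let $n\ge 2$. Every equilibrium graph $G$ of $(1,1,\dots,1)$-BG (all $n$ budgets equal to $1$) in the MAX version has connected underlying graph $U(G)$, $U(G)$ has a unique cycle, this cycle has at most $7$ vertices, and every vertex is within distance $2$ in $U(G)$ of the cycle.
   Context: Bounded budget network creation game $(b_1,\dots,b_n)$-BG: $n$ players with integer budgets $0\le b_i\le n-1$. A strategy of player $i$ is a set $S_i\subseteq\{1,\dots,n\}\setminus\{i\}$ with $|S_i|=b_i$; a profile is realized by the directed graph $G$ on $u_1,\dots,u_n$ with an arc $\overrightarrow{u_iu_j}$ iff $j\in S_i$. $U(G)$ is the undirected multigraph obtained by ignoring directions; if both $\overrightarrow{uv}$ and $\overrightarrow{vu}$ are arcs (a brace), $uv$ is a double edge of $U(G)$, regarded as a cycle with 2 vertices. $\operatorname{dist}(u,v)$ is the distance in $U(G)$, defined as $n^2$ between different components. MAX cost: $c_{MAX}(u)=\max_v\operatorname{dist}(u,v)+(\kappa-1)n^2$, $\kappa$ the number of components of $U(G)$. An equilibrium graph in the MAX version is a realization in which no vertex can decrease its MAX cost by changing its own strategy while the others are fixed. *)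

(* Defs.v *)
From mathcomp Require Import all_boot.
Set Implicit Arguments.
Unset Strict Implicit.
Unset Printing Implicit Defensive.

(* Players/vertices u_1..u_n are 'I_n.  A strategy profile assigns to each
   player i a set S i of other players; the realization G has an arc
   u_i -> u_j iff j \in S i. *)
Definition profile (n : nat) := 'I_n -> {set 'I_n}.

Definition valid_profile (n : nat) (b : 'I_n -> nat) (S : profile n) : Prop :=
  forall i : 'I_n, i \notin S i /\ #|S i| = b i.

(* Adjacency in the underlying undirected multigraph U(G)
   (multiplicity is irrelevant for distances / connectivity). *)
Definition adj (n : nat) (S : profile n) : rel 'I_n :=
  fun u v => (v \in S u) || (u \in S v).

Fixpoint walk (n : nat) (S : profile n) (k : nat) (u v : 'I_n) : bool :=
  match k with
  | 0 => u == v
  | k'.+1 => [exists w, adj S u w && walk S k' w v]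
  end.

(* dist(u,v) in U(G): length of a shortest walk (such a walk, if any, has
   length < n); n^2 if u and v lie in different components. *)
Definition dist (n : nat) (S : profile n) (u v : 'I_n) : nat :=
  \big[minn/n ^ 2]_(k < n | walk S k u v) k.

Definition ncomp (n : nat) (S : profile n) : nat :=
  #|[set [set v | connect (adj S) u v] | u : 'I_n]|.

Definition cost_max (n : nat) (S : profile n) (u : 'I_n) : nat :=
  \max_(v : 'I_n) dist S u v + (ncomp S - 1) * n ^ 2.

Definition deviate (n : nat) (S : profile n) (i : 'I_n) (T : {set 'I_n}) : profile n :=
  fun j => if j == i then T else S j.

Definition equilibrium_max (n : nat) (b : 'I_n -> nat) (S : profile n) : Prop :=
  valid_profile b S /\
  forall (i : 'I_n) (T : {set 'I_n}), i \notin T -> #|T| = b i ->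
    cost_max S i <= cost_max (deviate S i T) i.

Definition connectedU (n : nat) (S : profile n) : Prop :=
  forall u v : 'I_n, connect (adj S) u v.

(* Cycles of the multigraph U(G), given as sets of arcs of G (each arc is an
   edge of U(G); a brace gives two parallel edges, i.e. a 2-cycle). *)
Definition cycle_vertices (n : nat) (E : {set 'I_n * 'I_n}) : {set 'I_n} :=
  [set v | [exists a in E, (a.1 == v) || (a.2 == v)]].

Definition edge_deg (n : nat) (E : {set 'I_n * 'I_n}) (v : 'I_n) : nat :=
  #|[set a in E | a.1 == v]| + #|[set a in E | a.2 == v]|.

Definition is_cycle (n : nat) (S : profile n) (E : {set 'I_n * 'I_n}) : Prop :=
  [/\ (forall a, a \in E -> a.2 \in S a.1),
      E != set0,
      (forall v, v \in cycle_vertices E -> edge_deg E v = 2) &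
      (forall u v, u \in cycle_vertices E -> v \in cycle_vertices E ->
         connect (fun x y => ((x, y) \in E) || ((y, x) \in E)) u v)].

(* Main.v *)
Require Import Defs.
From mathcomp Require Import all_boot.
From mathcomp Require Import zify.
Set Implicit Arguments.
Unset Strict Implicit.
Unset Printing Implicit Defensive.


Section Walks.
Variable n : nat.
Implicit Types (S : profile n) (u v w : 'I_n).

Lemma adj_sym S : symmetric (adj S).
Proof. by move=> u v; rewrite /adj orbC. Qed.

Lemma walk_cat S a b u w v : walk S a u w -> walk S b w v -> walk S (a + b) u v.
Proof.
elim: a u => [|a IH] u /=; first by move/eqP->.
case/existsP=> z /andP[uz zw] wv; apply/existsP; exists z; rewrite uz /=; exact: IH.
Qed.

Lemma walk0 S u : walk S 0 u u.
Proof. by rewrite /= eqxx. Qed.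

Lemma walk1 S u v : adj S u v -> walk S 1 u v.
Proof. by move=> h; apply/existsP; exists v; rewrite h /= eqxx. Qed.

Lemma walk_sym S k u v : walk S k u v -> walk S k v u.
Proof.
elim: k u => [|k IH] u; first by rewrite /= eq_sym.
rewrite [walk _ _ u v]/=.
case/existsP=> z /andP[uz zv].
have h1 : walk S 1 z u by apply: walk1; rewrite adj_sym.
by have := walk_cat (IH _ zv) h1; rewrite addn1.
Qed.

Lemma walk_path S k u v :
  walk S k u v -> exists p, [/\ size p = k, path (adj S) u p & last u p = v].
Proof.
elim: k u => [|k IH] u /=; first by move/eqP->; exists [::].
case/existsP=> z /andP[uz /IH [p [sp pp lp]]].
by exists (z :: p); rewrite /= uz sp pp lp.
Qed.

Lemma path_walk S p u : path (adj S) u p -> walk S (size p) u (last u p).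
Proof.
elim: p u => [|z p IH] u /=; first by rewrite eqxx.
case/andP=> uz pz; apply/existsP; exists z; rewrite uz; exact: IH.
Qed.

Lemma connect_walk S u v : connect (adj S) u v -> exists k, walk S k u v.
Proof. by case/connectP=> p pp ->; exists (size p); apply: path_walk. Qed.

Lemma walk_connect S k u v : walk S k u v -> connect (adj S) u v.
Proof. by case/walk_path=> p [_ pp <-]; apply/connectP; exists p. Qed.

Lemma walk_short S k u v : walk S k u v -> exists2 j, j < n & walk S j u v.
Proof.
case/walk_path=> p [_ pp <-]; case: (shortenP pp) => p' pp' up' _.
exists (size p'); last exact: path_walk.
have := card_uniqP up'; rewrite /= => <-.
by apply: leq_trans (max_card _) _; rewrite card_ord.
Qed.

Lemma bigmin_le (I : eqType) (r : seq I) (P : pred I) (F : I -> nat) x i0 :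
  i0 \in r -> P i0 -> \big[minn/x]_(i <- r | P i) F i <= F i0.
Proof.
elim: r => // a r IH; rewrite inE big_cons => /orP[/eqP <- Pa | ir Pi0].
  by rewrite Pa geq_minl.
case: (P a); last exact: IH.
by apply: leq_trans (geq_minr _ _) (IH ir Pi0).
Qed.

Lemma dist_le S k u v : walk S k u v -> dist S u v <= k.
Proof.
move=> wk.
have H : forall j, j < n -> walk S j u v -> dist S u v <= j.
  move=> j jn wj; rewrite /dist.
  have := @bigmin_le _ (index_enum 'I_n) (fun i : 'I_n => walk S i u v)
    (fun i : 'I_n => nat_of_ord i) (n ^ 2) (Ordinal jn).
  by rewrite mem_index_enum /= => /(_ isT wj).
case: (ltnP k n) => [kn|nk]; first exact: H.
case: (walk_short wk) => j jn wj; apply: leq_trans (H j jn wj) _.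
by apply: leq_trans nk; apply: ltnW.
Qed.

Lemma dist_cases S u v : dist S u v = n ^ 2 \/ walk S (dist S u v) u v.
Proof.
rewrite /dist; apply: (big_ind (fun m => m = n ^ 2 \/ walk S m u v)).
- by left.
- move=> a b Ha Hb; rewrite /minn; case: ifP => _; [exact: Ha|exact: Hb].
- by move=> i wi; right.
Qed.

Lemma dist_walk S k u v : 1 < n -> walk S k u v -> walk S (dist S u v) u v.
Proof.
move=> n1 wk; case: (dist_cases S u v) => // E.
case: (walk_short wk) => j jn wj; have := dist_le wj; rewrite E => h.
have : n < n ^ 2 by rewrite -{1}(muln1 n) expnS expn1 ltn_mul2l; case: n n1 {wk wj jn h E}.
by move=> h2; have := leq_trans h (ltnW jn); rewrite leqNgt h2.
Qed.

Lemma dist_nowalk S u v : ~ connect (adj S) u v -> dist S u v = n ^ 2.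
Proof.
move=> nc; rewrite /dist big_pred0 // => i; apply/negP => wi.
by apply: nc; apply: walk_connect wi.
Qed.

Lemma dist_le_n2 S u v : dist S u v <= n ^ 2.
Proof.
rewrite /dist; apply: (big_ind (fun m => m <= n ^ 2)) => //.
- by move=> a b ha hb; rewrite geq_min ha.
- move=> i _; apply: leq_trans (ltnW (ltn_ord i)) _.
  by case: n i => // m _; rewrite expnS expn1 leq_pmulr.
Qed.

End Walks.


Section Func.
Variable n : nat.
Implicit Types (S : profile n) (u v w : 'I_n) (g : 'I_n -> 'I_n).

Definition Sg g : profile n := fun a => [set g a].

Lemma adjSg g u v : adj (Sg g) u v = (v == g u) || (u == g v).
Proof. by rewrite /adj /Sg !inE. Qed.

Lemma walk_eq S S' : adj S =2 adj S' -> forall k u v, walk S k u v = walk S' k u v.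
Proof.
move=> h; elim=> [|k IH] u v //=; apply: eq_existsb => z; by rewrite h IH.
Qed.

Lemma dist_eq S S' : adj S =2 adj S' -> forall u v, dist S u v = dist S' u v.
Proof. by move=> h u v; rewrite /dist; apply: eq_bigl => i; rewrite (walk_eq h). Qed.

Lemma ncomp_eq S S' : adj S =2 adj S' -> ncomp S = ncomp S'.
Proof.
move=> h; rewrite /ncomp.
have E : (fun u => [set v | connect (adj S) u v]) =1 (fun u => [set v | connect (adj S') u v]).
  by move=> u; apply/setP=> v; rewrite !inE (eq_connect h).
by rewrite (eq_imset _ E).
Qed.

Lemma cost_eq S S' : adj S =2 adj S' -> forall u, cost_max S u = cost_max S' u.
Proof.
move=> h u; rewrite /cost_max (ncomp_eq h); congr (_ + _).
by apply: eq_bigr => v _; rewrite (dist_eq h).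
Qed.

Lemma walk_iter g j u : walk (Sg g) j u (iter j g u).
Proof.
elim: j => [|j IH]; first exact: walk0.
rewrite iterS -addn1; apply: walk_cat IH _; apply: walk1.
by rewrite adjSg eqxx.
Qed.

Lemma walk_iter_dev g g' j u :
  (forall i, i < j -> g' (iter i g u) = g (iter i g u)) ->
  walk (Sg g') j u (iter j g u).
Proof.
elim: j => [|j IH] h; first exact: walk0.
rewrite iterS -addn1; apply: walk_cat (IH _) _.
  by move=> i ij; apply: h; apply: ltn_trans ij _.
by apply: walk1; rewrite adjSg -(h j (ltnSn j)) eqxx.
Qed.

Lemma lip_walk g (phi : 'I_n -> nat) :
  (forall a, phi a <= phi (g a) + 1 /\ phi (g a) <= phi a + 1) ->
  forall k u v, walk (Sg g) k u v -> phi v <= phi u + k.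
Proof.
move=> hl; elim=> [|k IH] u v /=; first by move/eqP->; rewrite addn0.
case/existsP=> z /andP[uz /IH hz]; move: uz; rewrite adjSg => /orP[/eqP e|/eqP e].
  have := (hl u).2; rewrite -e; lia.
have := (hl z).1; rewrite -e; lia.
Qed.

Lemma connS S : connect_sym (adj S).
Proof. exact: sym_connect_sym (@adj_sym n S). Qed.

Lemma ncomp1 S : 0 < n -> connectedU S -> ncomp S = 1.
Proof.
move=> n0 hc; rewrite /ncomp.
have -> : [set [set v | connect (adj S) u v] | u : 'I_n] = [set setT].
  apply/setP => A; rewrite inE; apply/imsetP/eqP => [[u _ ->]|->].
    by apply/setP => v; rewrite !inE hc.
  exists (Ordinal n0) => //; apply/setP => v; by rewrite !inE hc.
by rewrite cards1.
Qed.

Lemma cost_conn S u : 0 < n -> connectedU S -> cost_max S u = \max_v dist S u v.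
Proof. by move=> n0 hc; rewrite /cost_max ncomp1 // subnn mul0n addn0. Qed.

Lemma cost_ub S u B : 1 < n ->
  (forall v, exists2 k, k <= B & walk S k u v) -> connectedU S /\ cost_max S u <= B.
Proof.
move=> n1 h.
have hc : connectedU S.
  move=> a b; have [ka _ wa] := h a; have [kb _ wb] := h b.
  apply: connect_trans (walk_connect wb); rewrite connS; exact: walk_connect wa.
split=> //; rewrite cost_conn //; last by apply: ltn_trans n1.
apply/bigmax_leqP => v _; have [k kB wk] := h v.
exact: leq_trans (dist_le wk) kB.
Qed.

Lemma cost_lb S u v : dist S u v <= cost_max S u.
Proof. rewrite /cost_max; apply: leq_trans (leq_addr _ _); exact: leq_bigmax. Qed.

Definition dev g i w := fun a => if a == i then w else g a.

Lemma adj_dev S g i w : (forall a, S a = [set g a]) ->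
  adj (deviate S i [set w]) =2 adj (Sg (dev g i w)).
Proof.
move=> hS a b; rewrite /adj /deviate /Sg /dev.
by case: (a == i); case: (b == i); rewrite ?hS.
Qed.

Lemma adj_S S g : (forall a, S a = [set g a]) -> adj S =2 adj (Sg g).
Proof. by move=> hS a b; rewrite /adj /Sg !hS. Qed.

End Func.
Lemma cost_ub' n S u B : 1 < n ->
  (forall v, exists2 k, k <= B & walk S k u v) -> @cost_max n S u <= B.
Proof. by move=> n1 h; case: (cost_ub n1 h). Qed.


Section Cyc.
Variable n : nat.
Variable f : 'I_n -> 'I_n.
Hypothesis fP : forall a, f a != a.
Hypothesis conn : connectedU (Sg f).
Variable z0 : 'I_n.

Lemma periodic x : exists m, iter m.+1 f (iter n f x) = iter n f x.
Proof.
have ho : order f x <= n.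
  by rewrite /order; apply: leq_trans (max_card _) _; rewrite card_ord.
have := looping_order f x; rewrite /looping => /trajectP [i io E].
exists (order f x - i).-1.
rewrite prednK ?subn_gt0 // -iterD.
have -> : order f x - i + n = (n - i) + order f x by lia.
by rewrite iterD E -iterD subnK // ltnW // (leq_trans io).
Qed.

Definition c0 := iter n f z0.
Definition Cq := orbit f c0.
Definition k := order f c0.

Lemma c0cyc : fcycle f Cq.
Proof. by apply/(orbitPcycle 0 3); apply: periodic. Qed.

Lemma Cq_uniq : uniq Cq.
Proof. exact: orbit_uniq. Qed.

Lemma inC_f v : v \in Cq -> f v \in Cq.
Proof. exact: mem_orbit. Qed.

Lemma inC_iter j v : v \in Cq -> iter j f v \in Cq.
Proof. by elim: j => // j IH vC; rewrite iterS; apply: inC_f; apply: IH. Qed.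

Lemma c0_in : c0 \in Cq.
Proof. exact: in_orbit. Qed.

Lemma size_Cq : size Cq = k.
Proof. exact: size_orbit. Qed.

Lemma ord_k v : v \in Cq -> order f v = k.
Proof. by move=> vC; rewrite (order_cycle c0cyc Cq_uniq vC) size_Cq. Qed.

Lemma iter_k v : v \in Cq -> iter k f v = v.
Proof. by move=> vC; apply: (iter_order_cycle c0cyc c0_in vC). Qed.

Lemma fcon_C v b : v \in Cq -> fconnect f v b = (b \in Cq).
Proof. by move=> vC; apply: (fconnect_cycle c0cyc vC). Qed.

Lemma f_inj_C : {in Cq &, injective f}.
Proof. by apply/(orbitPcycle 5 3); apply: periodic. Qed.

Lemma Q_step u : (iter n f u \in Cq) = (iter n f (f u) \in Cq).
Proof.
rewrite -iterSr iterS; apply/idP/idP => [/inC_f //|h].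
have [m E] := periodic u; rewrite -E iterSr -iterS; exact: inC_iter.
Qed.

Lemma Q_walk j u v : walk (Sg f) j u v -> (iter n f u \in Cq) = (iter n f v \in Cq).
Proof.
elim: j u => [|j IH] u /=; first by move/eqP->.
case/existsP=> z /andP[]; rewrite adjSg => /orP[/eqP->|/eqP->] /IH <-.
  exact: Q_step.
by rewrite [in RHS]Q_step.
Qed.

Lemma Q_all x : iter n f x \in Cq.
Proof.
have [j wj] := connect_walk (conn c0 x).
by rewrite -(Q_walk wj); apply: inC_iter; apply: c0_in.
Qed.

Lemma k_gt1 : 1 < k.
Proof.
have k0 : 0 < k by apply: order_gt0.
rewrite ltnNge; apply/negP => k1; have k1' : k = 1 by lia.
by have := iter_k c0_in; rewrite k1' /= => /eqP; rewrite (negbTE (fP _)).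
Qed.

Definition pos v b := findex f v b.

Lemma pos_iter v b : v \in Cq -> b \in Cq -> iter (pos v b) f v = b.
Proof. by move=> vC bC; apply: iter_findex; rewrite fcon_C. Qed.

Lemma pos_lt v b : v \in Cq -> b \in Cq -> pos v b < k.
Proof. by move=> vC bC; rewrite -(ord_k vC); apply: findex_max; rewrite fcon_C. Qed.

Lemma pos_of v j : v \in Cq -> j < k -> pos v (iter j f v) = j.
Proof. by move=> vC jk; apply: findex_iter; rewrite ord_k. Qed.

Lemma pos0 v : pos v v = 0.
Proof. exact: findex0. Qed.

Lemma pos_f v b : v \in Cq -> b \in Cq -> (pos v b).+1 < k -> pos v (f b) = (pos v b).+1.
Proof. by move=> vC bC h; rewrite -{1}(pos_iter vC bC) -iterS pos_of. Qed.

Lemma pos_f_last v b : v \in Cq -> b \in Cq -> (pos v b).+1 = k -> f b = v.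
Proof. by move=> vC bC h; rewrite -{1}(pos_iter vC bC) -iterS h iter_k. Qed.

Definition exC x : exists j, iter j f x \in Cq := ex_intro _ n (Q_all x).
Definition dep x := ex_minn (exC x).

Lemma dep_in x : iter (dep x) f x \in Cq.
Proof. by rewrite /dep; case: ex_minnP. Qed.

Lemma dep_min x j : iter j f x \in Cq -> dep x <= j.
Proof. by rewrite /dep; case: ex_minnP => m _ h /h. Qed.

Lemma dep0 x : (dep x == 0) = (x \in Cq).
Proof.
apply/idP/idP => [/eqP h|h]; first by have := dep_in x; rewrite h.
by rewrite -leqn0; apply: (@dep_min x 0).
Qed.

Lemma notC_iter x j : j < dep x -> iter j f x \notin Cq.
Proof. by move=> h; apply/negP => /dep_min; rewrite leqNgt h. Qed.

Lemma depS x : x \notin Cq -> dep x = (dep (f x)).+1.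
Proof.
move=> xC; have d0 : 0 < dep x by rewrite lt0n dep0.
apply/eqP; rewrite eqn_leq; apply/andP; split.
  by apply: dep_min; rewrite iterSr dep_in.
rewrite -(prednK d0) ltnS; apply: dep_min.
by rewrite -iterSr prednK // dep_in.
Qed.

Definition rt x := iter (dep x) f x.

Lemma rt_in x : rt x \in Cq.
Proof. exact: dep_in. Qed.

Lemma rt_f x : x \notin Cq -> rt (f x) = rt x.
Proof. by move=> xC; rewrite /rt (depS xC) iterSr. Qed.

Lemma rt_C x : x \in Cq -> rt x = x.
Proof. by rewrite -dep0 /rt => /eqP->. Qed.

Lemma dep_iter x j : j <= dep x -> dep (iter j f x) = dep x - j.
Proof.
elim: j => [|j IH] h; first by rewrite subn0.
rewrite iterS; have h1 := IH (ltnW h).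
have nC : iter j f x \notin Cq by apply: notC_iter.
by move: (depS nC); rewrite h1 => E; lia.
Qed.

Lemma dep_le x : dep x <= n.
Proof. exact: dep_min (Q_all x). Qed.

Lemma dep_child x z : x \notin Cq -> f z = x -> dep z = (dep x).+1.
Proof.
move=> xC fz; have zC : z \notin Cq by apply: contra xC => /inC_f; rewrite fz.
by rewrite depS // fz.
Qed.

Definition del c b := minn (pos c b) (k - pos c b).
Definition gp c v := del c (rt v) + dep v.

Lemma gp_lip c : c \in Cq -> forall a, gp c a <= gp c (f a) + 1 /\ gp c (f a) <= gp c a + 1.
Proof.
move=> cC a; rewrite /gp; case: (boolP (a \in Cq)) => aC; last first.
  by rewrite rt_f // (depS aC); lia.
have faC := inC_f aC.
have da : dep a = 0 by apply/eqP; rewrite dep0.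
have dfa : dep (f a) = 0 by apply/eqP; rewrite dep0.
rewrite !rt_C // da dfa /del.
have pl := pos_lt cC aC.
case: (ltnP (pos c a).+1 k) => h.
  rewrite pos_f //; lia.
have e : (pos c a).+1 = k by lia.
rewrite (pos_f_last cC aC e) pos0; lia.
Qed.

Lemma cyc_walk g' c b : c \in Cq -> b \in Cq ->
  (forall j a, a \in Cq -> walk (Sg g') j a (iter j f a)) ->
  walk (Sg g') (del c b) c b.
Proof.
move=> cC bC hw; rewrite /del /minn; case: ifP => _.
  by have := hw (pos c b) c cC; rewrite pos_iter.
apply: walk_sym; have := hw (k - pos c b) b bC.
have E : iter (k - pos c b) f b = c.
  have hp := pos_iter cC bC; have hl := pos_lt cC bC.
  move: (pos c b) hp hl => p hp hl; rewrite -hp -iterD subnK ?iter_k //; exact: ltnW.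
by rewrite E.
Qed.

Lemma gp_walk g' c v : c \in Cq ->
  (forall j a, (a \in Cq) || (a == v) -> walk (Sg g') j a (iter j f a)) ->
  walk (Sg g') (gp c v) c v.
Proof.
move=> cC hw; rewrite /gp; apply: walk_cat (cyc_walk cC (rt_in v) _) _.
  by move=> j a aC; apply: hw; rewrite aC.
by apply: walk_sym; apply: hw; rewrite eqxx orbT.
Qed.

Lemma walk_f j a : walk (Sg f) j a (iter j f a).
Proof. exact: walk_iter. Qed.


Definition Cs := [set v | v \in Cq].
Definition Ecyc := [set (v, f v) | v in Cs].

Lemma card_Cs : #|Cs| = k.
Proof. by rewrite /Cs cardsE (card_uniqP Cq_uniq) size_Cq. Qed.

Lemma cv_E : cycle_vertices Ecyc = Cs.
Proof.
apply/setP => v; rewrite /cycle_vertices inE; apply/existsP/idP.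
  case=> a /andP[/imsetP[x xC ->]] /= /orP[/eqP<-|/eqP<-] //.
  by move: xC; rewrite !inE => /inC_f.
move=> vC; exists (v, f v); rewrite eqxx /= andbT.
by apply/imsetP; exists v.
Qed.

Definition prd v := iter k.-1 f v.

Lemma f_prd v : v \in Cq -> f (prd v) = v.
Proof.
move=> vC; rewrite /prd -iterS prednK ?iter_k //.
by apply: ltn_trans k_gt1.
Qed.

Lemma prd_in v : v \in Cq -> prd v \in Cq.
Proof. by move=> vC; apply: inC_iter. Qed.

Lemma is_cycle_E S : (forall a, S a = [set f a]) -> is_cycle S Ecyc.
Proof.
move=> hS; split.
- by move=> a /imsetP[x _ ->] /=; rewrite hS inE.
- apply/set0Pn; exists (c0, f c0); apply/imsetP; exists c0 => //.
  by rewrite inE c0_in.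
- move=> v; rewrite cv_E inE => vC; rewrite /edge_deg.
  have -> : [set a in Ecyc | a.1 == v] = [set (v, f v)].
    apply/setP => a; rewrite !inE; apply/andP/eqP => [[/imsetP[x _ ->] /= /eqP->] //|->].
    by split; [apply/imsetP; exists v; rewrite ?inE | rewrite /= eqxx].
  have -> : [set a in Ecyc | a.2 == v] = [set (prd v, v)].
    apply/setP => a; rewrite !inE; apply/andP/eqP => [[/imsetP[x xC ->] /= /eqP E]|->].
      congr pair => //; apply: f_inj_C; rewrite ?f_prd ?prd_in //.
      by move: xC; rewrite inE.
    split; last by rewrite /= eqxx.
    apply/imsetP; exists (prd v); rewrite ?inE ?prd_in //.
    by rewrite f_prd.
  by rewrite !cards1.
- move=> u v; rewrite !cv_E !inE => uC vC.
  rewrite -(pos_iter uC vC); elim: (pos u v) => [|j IH]; first exact: connect0.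
  apply: connect_trans IH _; apply: connect1; rewrite iterS.
  apply/orP; left; apply/imsetP; exists (iter j f u) => //.
  by rewrite inE inC_iter.
Qed.

Lemma uniq_E S : (forall a, S a = [set f a]) ->
  forall E', is_cycle S E' -> E' = Ecyc.
Proof.
move=> hS E' [h1 h2 h3 h4].
have hE : forall a, a \in E' -> a = (a.1, f a.1).
  by move=> [a1 a2] /h1 /=; rewrite hS inE => /eqP->.
set V := cycle_vertices E'.
have inV1 : forall a, a \in E' -> a.1 \in V.
  by move=> a aE; rewrite inE; apply/existsP; exists a; rewrite aE eqxx.
have inV2 : forall a, a \in E' -> a.2 \in V.
  by move=> a aE; rewrite inE; apply/existsP; exists a; rewrite aE eqxx orbT.
have outle : forall v, #|[set a in E' | a.1 == v]| <= 1.
  move=> v; rewrite -(cards1 (v, f v)); apply: subset_leq_card; apply/subsetP => a.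
  by rewrite !inE => /andP[aE /eqP av]; rewrite (hE a aE) -av.
have pre : forall v, v \in V -> exists2 a, a \in E' & a.2 = v.
  move=> v vV; have := h3 v vV; rewrite /edge_deg.
  case: (set_0Vmem [set a in E' | a.2 == v]) => [E0|[a]].
    by rewrite E0 cards0 addn0 => E2; have := outle v; rewrite E2.
  by rewrite inE => /andP[aE /eqP av]; exists a.
have VC : forall v, v \in V -> v \in Cq.
  move=> v vV.
  have : forall j, exists2 u, u \in V & iter j f u = v.
    elim=> [|j [u uV E]]; first by exists v.
    have [a aE au] := pre u uV; exists a.1; first exact: inV1.
    by rewrite iterSr -E -au {2}(hE a aE).
  case/(_ n) => u _ <-; exact: Q_all.
have inle : forall v, v \in V -> #|[set a in E' | a.2 == v]| <= 1.
  move=> v vV; rewrite -(cards1 (prd v, v)); apply: subset_leq_card; apply/subsetP => a.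
  rewrite !inE => /andP[aE /eqP av]; rewrite (hE a aE); apply/eqP; congr pair; last first.
    by rewrite -av (hE a aE).
  apply: f_inj_C; rewrite ?prd_in ?VC // ?inV1 //.
  by rewrite f_prd ?VC // -av {2}(hE a aE).
have out1 : forall v, v \in V -> (v, f v) \in E'.
  move=> v vV; have := h3 v vV; rewrite /edge_deg => E2.
  have : 0 < #|[set a in E' | a.1 == v]| by have := inle v vV; lia.
  case/card_gt0P => a; rewrite inE => /andP[aE /eqP av].
  by rewrite -av -(hE a aE).
have Vf : forall v, v \in V -> f v \in V.
  by move=> v vV; have := inV2 _ (out1 v vV).
have [a0 a0E] := set0Pn _ h2.
have VeqC : forall v, (v \in V) = (v \in Cq).
  move=> v; apply/idP/idP; first exact: VC.
  have a0V := inV1 a0 a0E; have a0C := VC _ a0V.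
  move=> vC; rewrite -(pos_iter a0C vC); elim: (pos a0.1 v) => // j IH.
  by rewrite iterS; apply: Vf.
apply/setP => a; apply/idP/idP => [aE|/imsetP[x xC ->]].
  by rewrite (hE a aE); apply/imsetP; exists a.1; rewrite // inE -VeqC inV1.
by apply: out1; rewrite VeqC; move: xC; rewrite inE.
Qed.

Hypothesis n1 : 1 < n.
Hypothesis eqm : forall i w, w != i -> cost_max (Sg f) i <= cost_max (Sg (dev f i w)) i.

Lemma walk_avoid x w : (forall z, f z != x) -> forall j a, a != x ->
  walk (Sg (dev f x w)) j a (iter j f a).
Proof.
move=> leaf j a ax; apply: walk_iter_dev => i _; rewrite /dev.
case: i => [|i] /=; first by rewrite (negbTE ax).
by rewrite (negbTE (leaf _)).
Qed.

Lemma lb_pot (phi : 'I_n -> nat) u v :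
  (forall a, phi a <= phi (f a) + 1 /\ phi (f a) <= phi a + 1) ->
  phi v <= phi u + cost_max (Sg f) u.
Proof.
move=> hl; have [j wj] := connect_walk (conn u v).
have wd := dist_walk n1 wj; have := lip_walk hl wd.
move=> h; apply: leq_trans h _; rewrite leq_add2l; exact: cost_lb.
Qed.

Lemma max_exists (F : 'I_n -> nat) : exists x, forall y, F y <= F x.
Proof. by case: (@arg_maxnP _ z0 xpredT F isT) => x _ h; exists x => y; apply: h. Qed.

Lemma gp_cc c : c \in Cq -> gp c c = 0.
Proof.
move=> cC; rewrite /gp rt_C // /del pos0.
have d0 : dep c = 0 by apply/eqP; rewrite dep0.
by rewrite d0 min0n.
Qed.

Lemma depth_le2 v : dep v <= 2.
Proof.
apply: contraT; rewrite -ltnNge => hv.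
have [x maxd] := max_exists dep.
set D := dep x.
have D3 : 3 <= D by apply: leq_trans hv (maxd v).
have xC : x \notin Cq by rewrite -dep0 -/D; lia.
have leaf : forall z, f z != x.
  by move=> z; apply/eqP => fz; have := dep_child xC fz; have := maxd z; rewrite -/D; lia.
set c := rt x.
have cC : c \in Cq by apply: rt_in.
set x1 := iter (D - 1) f x.
have dx1 : dep x1 = 1 by rewrite /x1 dep_iter -/D; lia.
have x1C : x1 \notin Cq by rewrite -dep0 dx1.
have fx1 : f x1 = c.
  by rewrite /x1 -iterS; have -> : (D - 1).+1 = D by lia.
pose U y := (0 < dep y) && (iter (dep y).-1 f y == x1).
have Ux : U x by rewrite /U -/D; apply/andP; split; [lia| rewrite /x1 subn1 //].
have U_intro : forall j y, iter j f y = x1 -> U y.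
  move=> j y E; case: (leqP j (dep y)) => hj.
    have := dep_iter hj; rewrite E dx1 => h.
    rewrite /U; apply/andP; split; first lia.
    by rewrite -E; have -> : (dep y).-1 = j by lia.
  have : iter j f y \in Cq.
    by rewrite -(subnK (ltnW hj)) iterD; apply: inC_iter; apply: dep_in.
  by rewrite E (negbTE x1C).
have U_notC : forall y, U y -> y \notin Cq.
  by move=> y /andP[h _]; rewrite -dep0 -lt0n.
have U_rt : forall y, U y -> rt y = c.
  move=> y /andP[h /eqP E]; rewrite /rt -(prednK h) iterS E //.
pose psi y := if U y then D - dep y else D + gp c y.
have psil : forall a, psi a <= psi (f a) + 1 /\ psi (f a) <= psi a + 1.
  move=> a; rewrite /psi.
  case: (boolP (U a)) => Ua; case: (boolP (U (f a))) => Ufa.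
  - have := depS (U_notC _ Ua); have := maxd a; rewrite -/D; lia.
  - case/andP: (Ua) => h /eqP E.
    case: (dep a) h E => // [[|j]] _ /= E.
      rewrite E fx1 gp_cc //; lia.
    have E' : iter j f (f a) = x1 by rewrite -iterSr; exact: E.
    by exfalso; move/negP: Ufa; apply; exact: U_intro E'.
  - exfalso; move/negP: Ua; apply; case/andP: Ufa => h /eqP E.
    by apply: (U_intro (dep (f a)).-1.+1 a); rewrite iterSr.
  - have := gp_lip cC a; lia.
have psix : psi x = 0 by rewrite /psi Ux subnn.
have lbU : forall y, ~~ U y -> D + gp c y <= cost_max (Sg f) x.
  by move=> y Uy; have := lb_pot x y psil; rewrite psix add0n /psi (negbTE Uy).
have Uc : ~~ U c by apply/negP => /U_notC; rewrite cC.
have Ufc : ~~ U (f c) by apply/negP => /U_notC; rewrite inC_f.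
have gfc : gp c (f c) = 1.
  have fcC := inC_f cC.
  have d0 : dep (f c) = 0 by apply/eqP; rewrite dep0.
  have kk := k_gt1.
  rewrite /gp d0 rt_C // /del (pos_f cC cC) pos0 //; lia.
set Gm := \max_(y | ~~ U y) gp c y.
have lbG : D + Gm <= cost_max (Sg f) x.
  have : Gm <= cost_max (Sg f) x - D.
    by apply/bigmax_leqP => y Uy; have := lbU y Uy; lia.
  have := lbU c Uc; lia.
have G1 : 1 <= Gm by rewrite -gfc; apply: (leq_bigmax_cond (P := fun y => ~~ U y)).
have gpG : forall y, ~~ U y -> gp c y <= Gm.
  by move=> y Uy; apply: (leq_bigmax_cond (P := fun y => ~~ U y)).
have avoid : forall w j a, a != x -> walk (Sg (dev f x w)) j a (iter j f a).
  by move=> w; apply: walk_avoid.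
have aCx : forall a, a \in Cq -> a != x by move=> a aC; apply: contraNneq xC => <-.
have cx : c != x by apply: aCx.
have ub1 : cost_max (Sg (dev f x c)) x <= 1 + maxn D Gm.
  apply: (cost_ub' n1) => y; case: (eqVneq y x) => [->|yx].
    by exists 0; [lia| apply: walk0].
  have w1 : walk (Sg (dev f x c)) 1 x c by apply: walk1; rewrite adjSg /dev eqxx /= eqxx.
  case: (boolP (U y)) => Uy.
    exists (1 + dep y); first by have := maxd y; rewrite -/D; lia.
    apply: walk_cat w1 _; apply: walk_sym; rewrite -{2}(U_rt y Uy); exact: avoid.
  exists (1 + gp c y); first by have := gpG y Uy; lia.
  apply: walk_cat w1 _; apply: gp_walk => // j a /orP[aC|/eqP->]; apply: avoid => //.
  exact: aCx.
have G1' : Gm <= 1 by have := eqm cx; lia.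
have x1x : x1 != x by apply/eqP => E; move: dx1; rewrite E -/D; lia.
have ub2 : cost_max (Sg (dev f x x1)) x <= D.
  apply: (cost_ub' n1) => y; case: (eqVneq y x) => [->|yx].
    by exists 0; [lia| apply: walk0].
  have w1 : walk (Sg (dev f x x1)) 1 x x1 by apply: walk1; rewrite adjSg /dev eqxx /= eqxx.
  case: (boolP (U y)) => Uy.
    exists (1 + (dep y).-1); first by have := maxd y; rewrite -/D; lia.
    apply: walk_cat w1 _; apply: walk_sym; case/andP: (Uy) => _ /eqP {2}<-.
    exact: avoid.
  exists (1 + 1 + gp c y); first by have := gpG y Uy; lia.
  have w2 : walk (Sg (dev f x x1)) (1 + 1) x c.
    by apply: walk_cat w1 _; have := avoid x1 1 x1 x1x; rewrite /= fx1.
  apply: walk_cat w2 _.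
  apply: gp_walk => // j a /orP[aC|/eqP->]; apply: avoid => //.
  exact: aCx.
by have := eqm x1x; lia.
Qed.
Lemma cyc_le7 : k <= 7.
Proof.
apply: contraT; rewrite -ltnNge => k8.
have [y maxd] := max_exists dep.
set H := dep y.
set a := rt y.
have aC : a \in Cq := rt_in y.
set p := k %/ 2.
have p4 : 4 <= p by rewrite /p; lia.
have pk : p < k by rewrite /p; lia.
set ci := iter p f a.
have ciC : ci \in Cq by apply: inC_iter.
have posa : pos ci a = k - p.
  have E : iter (k - p) f ci = a by rewrite /ci -iterD subnK ?iter_k // ltnW.
  by rewrite -{1}E pos_of //; lia.
have gpy : gp ci y = p + H.
  by rewrite /gp /del -/a posa -/H; rewrite /p; lia.
have lb : p + H <= cost_max (Sg f) ci.
  by rewrite -gpy; have := lb_pot ci y (gp_lip ciC); rewrite gp_cc.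
set w := iter (p - 1) f ci.
have posw : pos ci w = p - 1 by rewrite pos_of //; lia.
have wci : w != ci by apply/eqP => E; move: posw; rewrite E pos0; lia.
set f2 := dev f ci w.
have seg : forall s t, 1 <= s -> s <= t -> t <= k ->
    walk (Sg f2) (t - s) (iter s f ci) (iter t f ci).
  move=> s t s1 st tk.
  have -> : iter t f ci = iter (t - s) f (iter s f ci) by rewrite -iterD subnK.
  apply: walk_iter_dev => i it; rewrite /f2 /dev -iterD.
  case: eqP => // E; have := pos_of ciC (_ : i + s < k); rewrite E pos0; lia.
have tree : forall v, walk (Sg f2) (dep v) v (rt v).
  move=> v; apply: walk_iter_dev => i iv; rewrite /f2 /dev.
  by case: eqP => // E; have := notC_iter iv; rewrite E ciC.
have e1 : walk (Sg f2) 1 ci w by apply: walk1; rewrite adjSg /f2 /dev eqxx /= eqxx.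
have cyc : forall b, b \in Cq -> exists2 l, l <= p - 1 & walk (Sg f2) l ci b.
  move=> b bC; have Eb := pos_iter ciC bC; have sk := pos_lt ciC bC.
  move: (pos ci b) Eb sk => s Eb sk.
  case: (posnP s) => [s0|s1].
    by exists 0; [lia| rewrite -Eb s0; apply: walk0].
  case: (ltnP s (p - 1)) => h1.
    exists (1 + (p - 1 - s)); first lia.
    by apply: walk_cat e1 _; apply: walk_sym; rewrite -Eb; apply: seg; lia.
  case: (leqP s (2 * p - 3)) => h2.
    exists (1 + (s - (p - 1))); first lia.
    by apply: walk_cat e1 _; rewrite -Eb; apply: seg; lia.
  exists (k - s); first by rewrite /p in h2 *; lia.
  apply: walk_sym; rewrite -Eb; have := seg s k s1 (ltnW sk) (leqnn k).
  by rewrite iter_k.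
have ub : cost_max (Sg f2) ci <= p - 1 + H.
  apply: (cost_ub' n1) => vv.
  have [l lp wl] := cyc (rt vv) (rt_in vv).
  exists (l + dep vv); first by have := maxd vv; rewrite -/H; lia.
  apply: walk_cat wl _; apply: walk_sym; exact: tree.
by have := eqm wci; rewrite -/f2; lia.
Qed.

End Cyc.


Section Conn.
Variable n : nat.
Variable f : 'I_n -> 'I_n.
Hypothesis n1 : 1 < n.
Hypothesis eqm : forall i w, w != i -> cost_max (Sg f) i <= cost_max (Sg (dev f i w)) i.

Lemma conn_f : connectedU (Sg f).
Proof.
move=> a b; apply/idPn => nab.
set u := iter n f a.
have au : connect (adj (Sg f)) a u by apply: walk_connect (walk_iter _ _ _).
have nub : ~~ connect (adj (Sg f)) u b.
  by apply: contra nab => ub; apply: connect_trans au ub.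
have bu : b != u by apply: contraNneq nub => ->; exact: connect0.
have exm : exists m, iter m.+1 f u == u by have [m E] := periodic f a; exists m; rewrite E.
pose m := ex_minn exm.
have hm : iter m.+1 f u = u by rewrite /m; case: ex_minnP => ? /eqP.
have hmin : forall i, i < m -> iter i.+1 f u != u.
  by rewrite /m; case: ex_minnP => m0 _ h i im; apply/negP => /h; lia.
set f' := dev f u b.
have step : forall x, connect (adj (Sg f')) x (f x).
  move=> x; case: (eqVneq x u) => [->|xu].
    rewrite connS; apply: (@walk_connect _ _ m).
    have := @walk_iter_dev _ f f' m (f u); rewrite -iterSr hm; apply.
    by move=> i im; rewrite /f' /dev -iterSr (negbTE (hmin i im)).
  by apply: connect1; rewrite adjSg /f' /dev (negbTE xu) eqxx.
have coarse : forall x y, connect (adj (Sg f)) x y -> connect (adj (Sg f')) x y.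
  move=> x y /connect_walk [j]; elim: j x => [|j IH] x /=.
    by move/eqP->; exact: connect0.
  case/existsP => z /andP [xz zy]; apply: connect_trans (IH _ zy) .
  move: xz; rewrite adjSg => /orP[/eqP->|/eqP->]; first exact: step.
  by rewrite connS; exact: step.
have ub' : connect (adj (Sg f')) u b.
  by apply: connect1; rewrite adjSg /f' /dev eqxx /= eqxx.
pose comp (S : profile n) v := [set y | connect (adj S) v y].
pose h (A : {set 'I_n}) := \bigcup_(x in A) comp (Sg f') x.
have hc : forall v, h (comp (Sg f) v) = comp (Sg f') v.
  move=> v; apply/setP => y; apply/bigcupP/idP => [[x]|vy].
    by rewrite !inE => vx xy; apply: connect_trans (coarse _ _ vx) xy.
  by exists v; rewrite // inE connect0.
have EY : [set comp (Sg f') v | v : 'I_n] = h @: [set comp (Sg f) v | v : 'I_n].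
  by rewrite -imset_comp; apply: eq_imset => v /=; rewrite hc.
have ltc : ncomp (Sg f') < ncomp (Sg f).
  rewrite /ncomp.
  change (#|[set comp (Sg f') v | v : 'I_n]| < #|[set comp (Sg f) v | v : 'I_n]|).
  rewrite EY ltn_neqAle leq_imset_card andbT.
  apply/negP => /imset_injP hi.
  have e : h (comp (Sg f) u) = h (comp (Sg f) b).
    rewrite !hc; apply/setP => y; rewrite !inE; apply/idP/idP => hy.
      by apply: connect_trans hy; rewrite connS.
    exact: connect_trans ub' hy.
  have iu : comp (Sg f) u \in [set comp (Sg f) v | v : 'I_n] by apply/imsetP; exists u.
  have ib : comp (Sg f) b \in [set comp (Sg f) v | v : 'I_n] by apply/imsetP; exists b.
  have := hi _ _ iu ib e.
  move/setP/(_ b); rewrite !inE connect0 => /idP; by rewrite (negbTE nub).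
have nc1 : 0 < ncomp (Sg f').
  by apply/card_gt0P; exists (comp (Sg f') u); apply/imsetP; exists u.
have N0 : 0 < n ^ 2 by rewrite expn_gt0; lia.
have lb : n ^ 2 + (ncomp (Sg f) - 1) * n ^ 2 <= cost_max (Sg f) u.
  rewrite /cost_max leq_add2r; apply: leq_trans (leq_bigmax b).
  by rewrite dist_nowalk //; apply/negP.
have ub : cost_max (Sg f') u <= n ^ 2 + (ncomp (Sg f') - 1) * n ^ 2.
  rewrite /cost_max leq_add2r; apply/bigmax_leqP => v _; exact: dist_le_n2.
have := eqm bu; rewrite -/f'.
move: lb ub nc1 ltc N0; set N := n ^ 2; set A := ncomp _; set B := ncomp _.
nia.
Qed.

End Conn.


Theorem mainTheorem7 (n : nat) (hn : 2 <= n) (S : 'I_n -> {set 'I_n}) :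
  equilibrium_max (fun _ : 'I_n => 1) S ->
  connectedU S /\
  exists E : {set 'I_n * 'I_n},
    [/\ is_cycle S E,
        (forall E' : {set 'I_n * 'I_n}, is_cycle S E' -> E' = E),
        #|cycle_vertices E| <= 7 &
        (forall v : 'I_n, exists2 c, c \in cycle_vertices E & dist S v c <= 2)].
Proof.
case=> hv heq.
pose f a := odflt a [pick x in S a].
have hS : forall a, S a = [set f a].
  move=> a; have [_ /eqP/cards1P [x Ex]] := hv a.
  rewrite /f Ex; case: pickP => [y|]; first by rewrite inE => /eqP->.
  by move/(_ x); rewrite inE eqxx.
have fP : forall a, f a != a.
  by move=> a; have [ha _] := hv a; move: ha; rewrite hS inE eq_sym.
have eqm : forall i w, w != i -> cost_max (Sg f) i <= cost_max (Sg (dev f i w)) i.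
  move=> i w wi; rewrite -(cost_eq (adj_S hS)) -(cost_eq (adj_dev _ _ hS)).
  by apply: heq; rewrite ?inE ?cards1 // eq_sym.
have conn : connectedU (Sg f) by apply: conn_f hn eqm.
have z0 : 'I_n by exists 0; apply: leq_trans hn.
split.
  by move=> a b; rewrite (eq_connect (adj_S hS)).
exists (Ecyc f z0); split.
- by have := is_cycle_E fP z0 hS.
- by move=> E' hE'; have := uniq_E fP conn z0 hS hE'.
- by rewrite cv_E card_Cs; apply: cyc_le7 conn z0 hn eqm.
- move=> v; exists (rt conn z0 v).
    by rewrite cv_E inE; apply: rt_in.
  rewrite (dist_eq (adj_S hS)); apply: leq_trans (dist_le (walk_iter _ _ _)) _.
  exact: depth_le2 fP conn z0 hn eqm v.
Qed.
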